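(* Let $(X^*,p^* )$ be a market equilibrium of $\mathcal M$, and let $X$ be the allocation with $x_{ij}=m_i/\sum_{i'\in A}m_{i'}$ for all $i\in A$, $j\in G$. Then for every agent $i$, $\mathrm{delay}_i(X^* )\le\mathrm{delay}_i(X)$, where $\mathrm{delay}_i(X)$ is taken to be $+\infty$ if $\mathbf x_i$ does not satisfy CC$(i)$.
   Context: A market $\mathcal M$: finite agent set $A$, finite goods set $G$ (supply $1$ each), finite index set $C$; agent $i$ has real coefficients $a_{ijk}$, requirements $r_{ik}\ge0$, delays $d_{ij}\ge0$, budget $m_i>0$. CC$(i)$: $\sum_ja_{ijk}x_{ij}\ge r_{ik}$ for all $k$, $x_{ij}\ge0$. $(X,p)$ is a market equilibrium if $\sum_ix_{ij}\le1$ for all $j$, each $\mathbf x_i$ minimizes $\sum_jd_{ij}x_{ij}$ subject to CC$(i)$ and $\sum_jp_jx_{ij}\le m_i$, and $\sum_ix_{ij}<1\Rightarrow p_j=0$. $\mathrm{delay}_i(X)=\sum_jd_{ij}x_{ij}$ when $\mathbf x_i$ satisfies CC$(i)$. *)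

(* Defs.v *)
From HB Require Import structures.
From mathcomp Require Import all_boot all_order all_algebra.
Set Implicit Arguments. Unset Strict Implicit. Unset Printing Implicit Defensive.
Import Order.TTheory GRing.Theory Num.Theory.
Local Open Scope ring_scope.

(* A market: agents A, goods G (each of supply 1), constraint indices C. *)
Record market (R : realFieldType) (A G C : finType) := Market {
  coef : A -> G -> C -> R;
  req  : A -> C -> R;
  dly  : A -> G -> R;
  bud  : A -> R
}.

Definition wf_market (R : realFieldType) (A G C : finType) (M : market R A G C) :=
  (forall i k, 0 <= req M i k) /\ (forall i j, 0 <= dly M i j) /\ (forall i, 0 < bud M i).

Definition CC (R : realFieldType) (A G C : finType) (M : market R A G C) (i : A) (x : G -> R) :=
  (forall k, \sum_j coef M i j k * x j >= req M i k) /\ (forall j, 0 <= x j).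

Definition cost (R : realFieldType) (A G C : finType) (M : market R A G C) (i : A) (x : G -> R) : R :=
  \sum_j dly M i j * x j.

Definition budget_ok (R : realFieldType) (A G C : finType) (M : market R A G C)
  (p : G -> R) (i : A) (x : G -> R) := \sum_j p j * x j <= bud M i.

Definition market_equilibrium (R : realFieldType) (A G C : finType) (M : market R A G C)
  (X : A -> G -> R) (p : G -> R) :=
  (forall j, \sum_i X i j <= 1) /\
  (forall i, CC M i (X i) /\ budget_ok M p i (X i) /\
     forall y : G -> R, CC M i y -> budget_ok M p i y -> cost M i (X i) <= cost M i y) /\
  (forall j, \sum_i X i j < 1 -> p j = 0).

(* Comparison delay_i(X) <= delay_i(Y) in the extended reals, where
   delay_i(X) = +infinity when X i violates CC(i), and = cost otherwise. *)
Definition delay_le (R : realFieldType) (A G C : finType) (M : market R A G C)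
  (X Y : A -> G -> R) (i : A) : Prop :=
  (~ CC M i (X i) -> ~ CC M i (Y i)) /\
  (CC M i (X i) -> CC M i (Y i) -> cost M i (X i) <= cost M i (Y i)).

(* Main.v *)
Require Import Defs.
From HB Require Import structures.
From mathcomp Require Import all_boot all_order all_algebra.
Import Order.TTheory GRing.Theory Num.Theory.
Local Open Scope ring_scope.

Theorem theoremG3 (R : realFieldType) (A G C : finType) (M : market R A G C)
  (Xs : A -> G -> R) (ps : G -> R) :
  wf_market M ->
  market_equilibrium M Xs ps ->
  let X := fun (i : A) (_ : G) => bud M i / \sum_(i' : A) bud M i' in
  forall i : A, delay_le M Xs X i.
Proof.
move=> [_ [_ hm]] [hsup [hopt hclr]] X i.
have [hCC [_ _]] := hopt i.
split; first by move=> h; exfalso; exact: h.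
move=> _ hCX; case: (hopt i) => _ [_ hmin]; apply: hmin => //.
rewrite /budget_ok /X.
set S := \sum_(i' : A) bud M i'.
have Spos : 0 < S.
  by rewrite /S (bigD1 i) //= ltr_pwDl // sumr_ge0 // => k _; apply/ltW.
have hp : forall j, ps j = ps j * \sum_i0 Xs i0 j.
  move=> j; case: (ltrP (\sum_i0 Xs i0 j) 1) => h.
    by rewrite hclr // mul0r.
  have -> : \sum_i0 Xs i0 j = 1 by apply/le_anti; rewrite hsup h.
  by rewrite mulr1.
have hsum : \sum_j ps j <= S.
  rewrite (eq_bigr _ (fun j _ => hp j)).
  under eq_bigr do rewrite mulr_sumr.
  rewrite exchange_big /S; apply: ler_sum => k _.
  by case: (hopt k) => _ [hb _]; exact: hb.
under eq_bigr do rewrite mulrA.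
rewrite -mulr_suml.
rewrite -[X in _ <= X]mulr1 -(divff (lt0r_neq0 Spos)) mulrA.
rewrite ler_pM2r ?invr_gt0 //.
by rewrite -mulr_suml mulrC ler_pM2l.
Qed.
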